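(* Let $\mathcal{P}=\{1,\dots,p\}$ and let $M(1),\dots,M(p)\in\mathbb{R}^{n\times n}$ be exponentially stable (Hurwitz) matrices. Let $\tau_D>0$, $N_0>0$ and $\lambda>0$. Then there exists $g_0>0$ such that for every $g\ge g_0$ there is a constant $c>0$ such that, for every switching signal $\sigma\in\mathcal{S}_{ave}(\tau_D,N_0)$ and every initial condition, the solution of $\dot x=gM(\sigma(t))x$ satisfies $\|x(t)\|\le c\,e^{-\lambda t}\|x(0)\|$ for all $t\ge0$.
   Context: A switching signal is a piecewise-constant, right-continuous map $\sigma:[0,\infty)\to\mathcal{P}$ with finitely many discontinuities on each bounded interval. For $t\ge t_0\ge0$, $N_\sigma(t_0,t)$ is the number of discontinuities of $\sigma$ in the open interval $(t_0,t)$, and $\mathcal{S}_{ave}(\tau_D,N_0)$ is the set of switching signals with $N_\sigma(t_0,t)\le N_0+\frac{t-t_0}{\tau_D}$ for all $t\ge t_0\ge0$. $\|\cdot\|$ is any vector norm (with induced matrix norm). *)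

(* Defs.v *)
From mathcomp Require Import all_boot.
From Stdlib Require Import Reals.
Open Scope R_scope.

Definition vec (n : nat) := 'I_n -> R.
Definition mat (n : nat) := 'I_n -> 'I_n -> R.

Definition mulmv {n : nat} (A : mat n) (x : vec n) : vec n :=
  fun i => \big[Rplus/R0]_(j < n) (A i j * x j).

Definition is_norm {n : nat} (nrm : vec n -> R) : Prop :=
  (forall x, 0 <= nrm x) /\
  (forall x, nrm x = 0 -> forall i, x i = 0) /\
  (forall (a : R) (x : vec n), nrm (fun i => a * x i) = Rabs a * nrm x) /\
  (forall x y : vec n, nrm (fun i => x i + y i) <= nrm x + nrm y).

(* Hurwitz: every (complex) eigenvalue a + i b of A has a < 0.
   A (u + i w) = (a + i b)(u + i w) with u + i w <> 0, written in real terms. *)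
Definition hurwitz {n : nat} (A : mat n) : Prop :=
  forall (a b : R) (u w : vec n),
    (exists i, u i <> 0 \/ w i <> 0) ->
    (forall i, mulmv A u i = a * u i - b * w i) ->
    (forall i, mulmv A w i = b * u i + a * w i) ->
    a < 0.

Definition locally_constant_at {P : Type} (sigma : R -> P) (t : R) : Prop :=
  exists d, 0 < d /\ forall s, 0 <= s -> Rabs (s - t) < d -> sigma s = sigma t.

Definition discontinuity {P : Type} (sigma : R -> P) (t : R) : Prop :=
  0 <= t /\ ~ locally_constant_at sigma t.

Definition switching_signal {p : nat} (sigma : R -> 'I_p) : Prop :=
  (forall t, 0 <= t -> exists d, 0 < d /\
      forall s, t <= s < t + d -> sigma s = sigma t) /\
  (forall T, 0 <= T -> exists l : list R,
      forall t, 0 <= t <= T -> discontinuity sigma t -> List.In t l).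

(* N_sigma(t0,t) <= K : every finite set of discontinuities in (t0,t) has at most K elements *)
Definition N_sigma_le {P : Type} (sigma : R -> P) (t0 t K : R) : Prop :=
  forall l : list R, List.NoDup l ->
    (forall s, List.In s l -> t0 < s < t /\ discontinuity sigma s) ->
    INR (List.length l) <= K.

Definition S_ave {p : nat} (tauD N0 : R) (sigma : R -> 'I_p) : Prop :=
  switching_signal sigma /\
  forall t0 t, 0 <= t0 -> t0 <= t -> N_sigma_le sigma t0 t (N0 + (t - t0) / tauD).

(* x is a (Caratheodory) solution on [0,oo) of  x' = g M(sigma(t)) x :
   continuous on [0,oo), and satisfying the ODE at every t > 0 that is not a
   switching time. *)
Definition solution {n p : nat} (g : R) (M : 'I_p -> mat n) (sigma : R -> 'I_p)
    (x : R -> vec n) : Prop :=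
  (forall (i : 'I_n) t, 0 <= t -> forall eps, 0 < eps -> exists d, 0 < d /\
      forall s, 0 <= s -> Rabs (s - t) < d -> Rabs (x s i - x t i) < eps) /\
  (forall t, 0 < t -> ~ discontinuity sigma t -> forall i : 'I_n,
      derivable_pt_lim (fun s => x s i) t (g * mulmv (M (sigma t)) (x t) i)).

(* Main.v *)
Require Import Defs.
From HB Require Import structures.
From mathcomp Require Import all_boot all_order all_algebra.
From mathcomp Require Import complex.
From mathcomp Require Import Rstruct.
From Stdlib Require Import Reals Lra Psatz FunctionalExtensionality ClassicalEpsilon Classical.
Delimit Scope ring_scope with ring.
Notation "r &C" := (@Complex R r 0) (at level 2, format "r &C").

Module AlgPart.
Import Order.TTheory GRing.Theory Num.Theory.
Open Scope R_scope.
Lemma sum_le (n : nat) (F G : 'I_n -> R) :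
  (forall i, F i <= G i) -> \big[Rplus/R0]_(i < n) F i <= \big[Rplus/R0]_(i < n) G i.
Proof. move=> H; apply/RleP; apply: ler_sum => i _; apply/RleP; exact: H. Qed.

Lemma sum_ge0 (n : nat) (F : 'I_n -> R) :
  (forall i, 0 <= F i) -> 0 <= \big[Rplus/R0]_(i < n) F i.
Proof. move=> H; apply/RleP; apply: sumr_ge0 => i _; apply/RleP; exact: H. Qed.

Lemma sum_ge_term (n : nat) (F : 'I_n -> R) j :
  (forall i, 0 <= F i) -> F j <= \big[Rplus/R0]_(i < n) F i.
Proof.
move=> H; rewrite (bigD1 j) //=.
have : 0 <= \big[Rplus/R0]_(i < n | i != j) F i.
  by apply/RleP; apply: sumr_ge0 => i _; apply/RleP; apply: H.
move=> h; apply: (Rle_trans _ (F j + 0)); [lra | apply: Rplus_le_compat_l; exact: h].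
Qed.

Lemma sum_split (n : nat) (F G : 'I_n -> R) :
  \big[Rplus/R0]_(i < n) (F i + G i) = \big[Rplus/R0]_(i < n) F i + \big[Rplus/R0]_(i < n) G i.
Proof. exact: big_split. Qed.

Lemma sum_scal (n : nat) (c : R) (F : 'I_n -> R) :
  \big[Rplus/R0]_(i < n) (c * F i) = c * \big[Rplus/R0]_(i < n) F i.
Proof. by rewrite -(big_distrr (plus:=Rplus)). Qed.

Lemma sum_const n (c : R) : \big[Rplus/R0]_(i < n) c = INR n * c.
Proof.
elim: n => [|n IH]; first by rewrite big_ord0 /=; ring.
rewrite big_ord_recr /= IH. change (INR n * c + c = INR (S n) * c). rewrite S_INR; ring.
Qed.

Lemma sum_delta (n : nat) (j : 'I_n) (F : 'I_n -> R) :
  \big[Rplus/R0]_(i < n) (if i == j then F i else 0) = F j.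
Proof.
rewrite (bigD1 j) //= eqxx big1 ?Rplus_0_r // => i /negbTE ->. by [].
Qed.

Lemma sum_ext (n : nat) (F G : 'I_n -> R) :
  (forall i, F i = G i) -> \big[Rplus/R0]_(i < n) F i = \big[Rplus/R0]_(i < n) G i.
Proof. by move=> H; apply: eq_bigr => i _. Qed.


Lemma Rabs_sum (n : nat) (F : 'I_n -> R) :
  Rabs (\big[Rplus/R0]_(i < n) F i) <= \big[Rplus/R0]_(i < n) Rabs (F i).
Proof.
apply: (big_ind2 (fun x y => Rabs x <= y)).
- cbv beta; rewrite Rabs_R0; lra.
- move=> x1 y1 x2 y2 h1 h2. have := Rabs_triang x1 x2. cbv beta in *. lra.
- move=> i _; cbv beta; lra.
Qed.

Lemma G2 n m (L L' : 'I_n -> 'I_m -> R) : exists K, 0 < K /\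
  forall a b : 'I_n -> R,
  \big[Rplus/R0]_(j < m) ((\big[Rplus/R0]_(i < n) (a i * L i j + b i * L' i j)) *
                       (\big[Rplus/R0]_(i < n) (a i * L i j + b i * L' i j)))
  <= K * (\big[Rplus/R0]_(i < n) (a i * a i) + \big[Rplus/R0]_(i < n) (b i * b i)).
Proof.
pose c j := \big[Rplus/R0]_(i < n) (Rabs (L i j) + Rabs (L' i j)).
exists (1 + \big[Rplus/R0]_(j < m) (c j * c j)); split.
  have : 0 <= \big[Rplus/R0]_(j < m) (c j * c j).
    apply: sum_ge0 => j. apply: Rle_0_sqr.
  lra.
move=> a b.
set S := \big[Rplus/R0]_(i < n) (a i * a i) + \big[Rplus/R0]_(i < n) (b i * b i).
have hSa : 0 <= \big[Rplus/R0]_(i < n) (a i * a i) by apply: sum_ge0 => i; apply: Rle_0_sqr.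
have hSb : 0 <= \big[Rplus/R0]_(i < n) (b i * b i) by apply: sum_ge0 => i; apply: Rle_0_sqr.
have hS : 0 <= S by rewrite /S; lra.
have ha : forall i, Rabs (a i) <= sqrt S.
  move=> i; rewrite -sqrt_Rsqr_abs; apply: sqrt_le_1_alt; rewrite /Rsqr.
  have h : a i * a i <= \big[Rplus/R0]_(k < n) (a k * a k) :=
    sum_ge_term _ (fun k => a k * a k) i (fun k => Rle_0_sqr (a k)).
  rewrite /S; lra.
have hb : forall i, Rabs (b i) <= sqrt S.
  move=> i; rewrite -sqrt_Rsqr_abs; apply: sqrt_le_1_alt; rewrite /Rsqr.
  have h : b i * b i <= \big[Rplus/R0]_(k < n) (b k * b k) :=
    sum_ge_term _ (fun k => b k * b k) i (fun k => Rle_0_sqr (b k)).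
  rewrite /S; lra.
have hsq := sqrt_pos S.
have hj : forall j, (\big[Rplus/R0]_(i < n) (a i * L i j + b i * L' i j)) *
                    (\big[Rplus/R0]_(i < n) (a i * L i j + b i * L' i j)) <= S * (c j * c j).
  move=> j. set x := \big[Rplus/R0]_(i < n) _.
  have hx : Rabs x <= sqrt S * c j.
    apply: (Rle_trans _ _ _ (Rabs_sum _ _)).
    rewrite /c -sum_scal; apply: sum_le => i.
    apply: (Rle_trans _ _ _ (Rabs_triang _ _)). rewrite !Rabs_mult.
    have h1 : Rabs (a i) * Rabs (L i j) <= sqrt S * Rabs (L i j).
      apply: Rmult_le_compat_r; [apply: Rabs_pos | exact: ha].
    have h2 : Rabs (b i) * Rabs (L' i j) <= sqrt S * Rabs (L' i j).
      apply: Rmult_le_compat_r; [apply: Rabs_pos | exact: hb].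
    lra.
  have hc : 0 <= c j by apply: sum_ge0 => i; have := Rabs_pos (L i j); have := Rabs_pos (L' i j); lra.
  have := Rsqr_le_abs_1 x (sqrt S * c j).
  rewrite (Rabs_right (sqrt S * c j)); last by apply: Rle_ge; apply: Rmult_le_pos.
  move=> /(_ hx). rewrite /Rsqr.
  have -> : sqrt S * c j * (sqrt S * c j) = (sqrt S * sqrt S) * (c j * c j) by ring.
  by rewrite sqrt_sqrt.
apply: (Rle_trans _ _ _ (sum_le _ _ _ hj)).
rewrite sum_scal.
have : 0 <= S * \big[Rplus/R0]_(j < m) (c j * c j) by apply: Rmult_le_pos => //; apply: sum_ge0 => j; apply: Rle_0_sqr.
nra.
Qed.

Section Alg.
Local Notation Re := (@complex.Re R).
Local Notation Im := (@complex.Im R).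
Local Open Scope ring_scope.
Local Open Scope complex_scope.
Local Notation C := (R[i]).

Definition Bc {n} (A : mat n) : 'M[C]_n := \matrix_(i, j) (A j i)&C.

Lemma Re_sum (n : nat) (F : 'I_n -> C) : Re (\sum_(i < n) F i) = \sum_(i < n) Re (F i).
Proof. exact: raddf_sum. Qed.
Lemma Im_sum (n : nat) (F : 'I_n -> C) : Im (\sum_(i < n) F i) = \sum_(i < n) Im (F i).
Proof. exact: raddf_sum. Qed.

Lemma Re_mulrC (z : C) (r : R) : Re (z * r &C) = Re z * r.
Proof. by case: z => a b /=; rewrite mulr0 subr0. Qed.
Lemma Im_mulrC (z : C) (r : R) : Im (z * r &C) = Im z * r.
Proof. by case: z => a b /=; rewrite mulr0 add0r. Qed.
Lemma Re_mulCr (z : C) (r : R) : Re (r &C * z) = r * Re z.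
Proof. by case: z => a b /=; rewrite mul0r subr0. Qed.
Lemma Im_mulCr (z : C) (r : R) : Im (r &C * z) = r * Im z.
Proof. by case: z => a b /=; rewrite mul0r addr0. Qed.

Lemma bigRE n (F : 'I_n -> R) : \big[Rplus/R0]_(i < n) F i = \sum_(i < n) F i.
Proof. by []. Qed.

Lemma hurwitz_eig n (A : mat n) (u : 'rV[C]_n) (l : C) :
  hurwitz A -> u != 0 -> u *m Bc A = l *: u -> Re l < 0.
Proof.
move=> H u0 eq.
have key : forall j, \sum_k u 0 k * (A j k) &C = l * u 0 j.
  move=> j; have := congr1 (fun M : 'M[C]_(1,n) => M 0 j) eq; rewrite !mxE => <-.
  by apply: eq_bigr => k _; rewrite mxE.
apply/RltP; apply: (H (Re l) (Im l) (fun i => Re (u 0 i)) (fun i => Im (u 0 i))).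
- have [i ui] : exists i, u 0 i != 0.
    apply/existsP; apply: contraNT u0; rewrite negb_exists => /forallP Hi.
    by apply/eqP/rowP => i; rewrite mxE; apply/eqP; have := Hi i; rewrite negbK.
  exists i; case: (u 0 i) ui => a b; rewrite eq_complex /= negb_and => /orP[] /eqP.
  + by left.
  + by right.
- move=> j; rewrite /mulmv bigRE.
  have := congr1 Re (key j); rewrite Re_sum /= => e.
  transitivity (\sum_k Re (u 0 k * (A j k) &C)).
    by apply: eq_bigr => k _; rewrite Re_mulrC mulrC.
  by rewrite e; case: (l) => a b; case: (u 0 j) => c d.
- move=> j; rewrite /mulmv bigRE.
  have := congr1 Im (key j); rewrite Im_sum /= => e.
  transitivity (\sum_k Im (u 0 k * (A j k) &C)).
    by apply: eq_bigr => k _; rewrite Im_mulrC mulrC.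
  by rewrite e; case: (l) => a b; case: (u 0 j) => c d /=; rewrite addrC.
Qed.

Lemma trig_diag_eig n (B T P : 'M[C]_n) : P \in unitmx -> T = P *m B *m invmx P ->
  is_trig_mx T -> forall j, exists2 u : 'rV[C]_n, u != 0 & u *m B = T j j *: u.
Proof.
move=> Pu eT Ttrig j.
have : eigenvalue T (T j j).
  rewrite eigenvalue_root_char char_poly_trig // (bigD1 j) //= rootM.
  by rewrite root_XsubC eqxx.
move=> /eigenvalueP [v vT v0]; exists (v *m P).
  by rewrite mulmx_free_eq0 ?row_free_unit.
have TP : T *m P = P *m B by rewrite eT mulmxKV.
by rewrite -mulmxA -TP mulmxA vT scalemxAl.
Qed.
End Alg.

Lemma aux_xyt (x y t : R) : x * y * t <= Rabs t * (x*x+y*y) / 2.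
Proof.
destruct (Rle_dec 0 t) as [h|h].
- rewrite Rabs_right; [|lra].
  pose proof (Rmult_le_pos t _ h (Rle_0_sqr (x-y))). unfold Rsqr in *. lra.
- rewrite Rabs_left; [|lra].
  assert (h' : 0 <= - t) by lra.
  pose proof (Rmult_le_pos (-t) _ h' (Rle_0_sqr (x+y))). unfold Rsqr in *. lra.
Qed.

Section Core.
Local Notation C := (R[i]).
Local Notation Re := (@complex.Re R).
Local Notation Im := (@complex.Im R).

Definition rdot (a b : R[i]) : R := Re a * Re b + Im a * Im b.
Definition Nc (a : R[i]) : R := Re a * Re a + Im a * Im a.

Lemma Nc_ge0 a : 0 <= Nc a.
Proof. rewrite /Nc. pose proof (Rle_0_sqr (Re a)). pose proof (Rle_0_sqr (Im a)). unfold Rsqr in *. lra. Qed.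

Lemma rdot_mul (a b t : R[i]) : rdot a (b * t)%ring =
  Re a * (Re b * Re t - Im b * Im t) + Im a * (Re b * Im t + Im b * Re t).
Proof. by case: a => [ar ai]; case: b => [br bi]; case: t => [tr ti]. Qed.

Lemma rdot_bound (a b t : R[i]) :
  rdot a (b * t)%ring <= (Rabs (Re t) + Rabs (Im t)) * (Nc a + Nc b) / 2.
Proof.
rewrite rdot_mul /Nc.
have h1 := aux_xyt (Re a) (Re b) (Re t).
have h2 := aux_xyt (Re a) (Im b) (- Im t).
have h3 := aux_xyt (Im a) (Re b) (Im t).
have h4 := aux_xyt (Im a) (Im b) (Re t).
rewrite Rabs_Ropp in h2. lra.
Qed.

Lemma rdot_mulr (a b : R[i]) (r : R) : rdot a (b * r&C)%ring = r * rdot a b.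
Proof.
case: a => [ar ai]; case: b => [br bi]; rewrite /rdot /=.
change ((ar * (br * r - bi * 0) + ai * (br * 0 + bi * r))%R = r * (ar * br + ai * bi)).
ring.
Qed.

Lemma rdot_self (a t : R[i]) : rdot a (a * t)%ring = Re t * Nc a.
Proof. rewrite rdot_mul /Nc. ring. Qed.

Lemma rdot0 (a : R[i]) : rdot a 0%ring = 0.
Proof. rewrite /rdot /=. change (Re a * 0 + Im a * 0 = 0). ring. Qed.

Lemma rdot_sum n (a : R[i]) (F : 'I_n -> R[i]) :
  rdot a (\sum_(i < n) F i)%ring = \big[Rplus/R0]_(i < n) rdot a (F i).
Proof.
rewrite /rdot Re_sum Im_sum -!sum_scal -sum_split. by [].
Qed.
End Core.

Lemma Rle_div_l a b c : 0 < b -> a <= c * b -> a / b <= c.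
Proof.
move=> hb h. apply: (Rmult_le_reg_r b) => //. rewrite /Rdiv Rmult_assoc Rinv_l; lra.
Qed.

Lemma rc_mul (a b : R) : (a &C * b &C)%ring = (a * b)&C :> R[i].
Proof.
rewrite /=. congr Complex.
- change (a * b - 0 * 0 = a * b)%R. ring.
- change (a * 0 + 0 * b = 0)%R. ring.
Qed.

Section Core2.
Variables (n : nat) (T : 'M[R[i]]_n) (al : R).
Hypothesis Ttrig : is_trig_mx T.
Hypothesis al0 : 0 < al.
Hypothesis al1 : al <= 1.
Hypothesis Tdiag : forall j, complex.Re (T j j) <= - al.

Definition cT i j := Rabs (complex.Re (T i j)) + Rabs (complex.Im (T i j)).
Definition Kt := \big[Rplus/R0]_(i < n) \big[Rplus/R0]_(j < n) cT i j.
Definition eps := al / (2 * (1 + Kt * INR n)).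
Definition dd (i : 'I_n) : R := / (eps ^ i).

Lemma cT_ge0 i j : 0 <= cT i j.
Proof. rewrite /cT; pose proof (Rabs_pos (complex.Re (T i j))); pose proof (Rabs_pos (complex.Im (T i j))); lra. Qed.

Lemma Kt_ge0 : 0 <= Kt.
Proof. apply: sum_ge0 => i; apply: sum_ge0 => j; exact: cT_ge0. Qed.

Lemma cT_le i j : cT i j <= Kt.
Proof.
apply: (Rle_trans _ (\big[Rplus/R0]_(j<n) cT i j)).
apply: (sum_ge_term _ (fun l => cT i l) j) => l; exact: cT_ge0.
- apply: (sum_ge_term _ (fun k => \big[Rplus/R0]_(l<n) cT k l) i) => k.
  apply: sum_ge0 => l; exact: cT_ge0.
Qed.

Lemma eps_pos : 0 < eps.
Proof.
rewrite /eps; have := Kt_ge0; have := pos_INR n => h1 h2.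
apply: Rdiv_lt_0_compat => //. have := Rmult_le_pos _ _ h2 h1. lra.
Qed.

Lemma eps_le1 : eps <= 1.
Proof.
rewrite /eps; have := Kt_ge0; have := pos_INR n => h1 h2.
have h3 := Rmult_le_pos _ _ h2 h1.
apply: Rle_div_l; lra.
Qed.

Lemma eps_Kt : eps * Kt * INR n <= al / 2.
Proof.
rewrite /eps; have := Kt_ge0; have := pos_INR n => h1 h2.
have h3 := Rmult_le_pos _ _ h2 h1.
have -> : al / (2 * (1 + Kt * INR n)) * Kt * INR n = (al / 2) * (Kt * INR n / (1 + Kt * INR n)).
  field; lra.
rewrite -{2}(Rmult_1_r (al / 2)). apply: Rmult_le_compat_l; first lra.
apply: Rle_div_l; lra.
Qed.

Lemma dd_pos i : 0 < dd i.
Proof. rewrite /dd; apply: Rinv_0_lt_compat; apply: pow_lt; exact: eps_pos. Qed.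

Lemma dd_ratio (i j : 'I_n) : (j < i)%nat -> 0 <= dd j / dd i <= eps.
Proof.
move=> lt_ji.
have e : dd j / dd i = eps ^ (i - j)%nat.
  rewrite /dd. have -> : (i : nat) = ((i - j) + j)%nat by rewrite subnK // ltnW.
  rewrite pow_add addnK. have := eps_pos => h.
  field; split; apply: pow_nonzero; lra.
rewrite e; split; first by apply: pow_le; have := eps_pos; lra.
have -> : (i - j)%nat = (i - j).-1.+1 by rewrite prednK // subn_gt0.
change (eps * eps ^ (i - j).-1 <= eps).
apply: (Rle_trans _ (eps * 1)); last lra.
apply: Rmult_le_compat_l; first by have := eps_pos; lra.
rewrite -(pow1 (i - j)%nat.-1). apply: pow_incr. have := eps_pos; have := eps_le1; lra.
Qed.

Lemma term_bound (w : 'I_n -> R[i]) i j :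
  dd j / dd i * rdot (w j) (w i * T i j)%ring <=
  (if i == j then - al * Nc (w j) else 0) + eps * Kt * (Nc (w i) + Nc (w j)) / 2.
Proof.
have hNi := Nc_ge0 (w i); have hNj := Nc_ge0 (w j).
have hK := Kt_ge0; have he := eps_pos.
have hNN : 0 <= eps * Kt * (Nc (w i) + Nc (w j)) / 2.
  apply: Rmult_le_pos; last lra.
  apply: Rmult_le_pos; last lra. apply: Rmult_le_pos; lra.
case: (ltngtP i j) => [lt_ij | lt_ji | eq_ij].
- have -> : T i j = 0%ring by move/is_trig_mxP: Ttrig; apply.
  rewrite mulr0 rdot0 (_ : (i == j) = false); last first.
    by apply/negbTE; rewrite neq_ltn lt_ij.
  rewrite Rmult_0_r; lra.
- rewrite (_ : (i == j) = false); last by apply/negbTE; rewrite neq_ltn lt_ji orbT.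
  have [e0 e1] := dd_ratio i j lt_ji.
  have hb := rdot_bound (w j) (w i) (T i j).
  have hc := cT_le i j. rewrite /cT in hc.
  set r := rdot _ _ in hb *.
  set B := Kt * (Nc (w i) + Nc (w j)) / 2.
  have hB : r <= B.
    apply: (Rle_trans _ _ _ hb). rewrite /B.
    apply: Rmult_le_compat_r; first lra.
    rewrite [Nc (w j) + _]Rplus_comm. apply: Rmult_le_compat_r; lra.
  have hB0 : 0 <= B by rewrite /B; apply: Rmult_le_pos; [apply: Rmult_le_pos; lra|lra].
  apply: (Rle_trans _ (dd j / dd i * B)); first by apply: Rmult_le_compat_l.
  apply: (Rle_trans _ (eps * B)); first by apply: Rmult_le_compat_r.
  rewrite /B; lra.
- have ij : i = j by apply: val_inj.
  subst i. rewrite eqxx rdot_self.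
  have -> : dd j / dd j = 1 by rewrite /Rdiv Rinv_r //; have := dd_pos j; lra.
  have := Tdiag j => hT.
  have : complex.Re (T j j) * Nc (w j) <= - al * Nc (w j) by apply: Rmult_le_compat_r.
  lra.
Qed.

Lemma core (z : 'rV[R[i]]_n) :
  \big[Rplus/R0]_(j < n) rdot (z 0 j * (dd j)&C)%ring ((z *m T) 0 j * (dd j)&C)%ring
   <= - (al / 2) * \big[Rplus/R0]_(j < n) Nc (z 0 j * (dd j)&C)%ring.
Proof.
set w := fun j => (z 0 j * (dd j)&C)%ring.
have step1 : forall j, ((z *m T) 0 j * (dd j)&C)%ring =
    (\sum_i w i * (T i j * (Rdiv (dd j) (dd i))&C))%ring.
  move=> j; rewrite mxE mulr_suml; apply: eq_bigr => i _.
  rewrite /w -!mulrA; congr (_ * _)%ring.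
  rewrite mulrCA rc_mul; congr (_ * _)%ring.
  congr Complex. change (dd j = dd i * (dd j / dd i)). have := dd_pos i => h. field. lra.
have step2 : forall j, rdot (w j) ((z *m T) 0 j * (dd j)&C)%ring =
    \big[Rplus/R0]_(i < n) (dd j / dd i * rdot (w j) (w i * T i j)%ring).
  move=> j; rewrite step1 rdot_sum; apply: sum_ext => i.
  by rewrite mulrA rdot_mulr.
rewrite (sum_ext _ _ _ step2).
apply: (Rle_trans _ (\big[Rplus/R0]_(j < n) \big[Rplus/R0]_(i < n)
   ((if i == j then - al * Nc (w j) else 0) + eps * Kt * (Nc (w i) + Nc (w j)) / 2))).
  apply: sum_le => j; apply: sum_le => i; exact: term_bound.
set S := \big[Rplus/R0]_(j < n) Nc (w j).
have hS : 0 <= S by apply: sum_ge0 => j; exact: Nc_ge0.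
have e1 : forall j, \big[Rplus/R0]_(i < n)
   ((if i == j then - al * Nc (w j) else 0) + eps * Kt * (Nc (w i) + Nc (w j)) / 2)
   = - al * Nc (w j) + (eps * Kt / 2) * (S + INR n * Nc (w j)).
  move=> j; rewrite sum_split.
  rewrite (sum_ext _ (fun i => if i == j then - al * Nc (w j) else 0)
     (fun i => if i == j then (fun k => - al * Nc (w k)) i else 0)); last first.
    by move=> i; case: eqP => // ->.
  rewrite sum_delta.
  rewrite (sum_ext _ _ (fun i => (eps * Kt / 2) * (Nc (w i) + Nc (w j)))); last first.
    by move=> i; rewrite /Rdiv; ring.
  by rewrite sum_scal sum_split sum_const.
rewrite (sum_ext _ _ _ e1) sum_split sum_scal sum_scal sum_split sum_scal -/S.
rewrite sum_const.
have hek := eps_Kt. have hn := pos_INR n.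
have : eps * Kt * INR n * S <= al / 2 * S by apply: Rmult_le_compat_r.
lra.
Qed.
End Core2.

Definition lin {n} (W : mat n) (y : vec n) (j : 'I_n) : R := \big[Rplus/R0]_(i < n) (y i * W i j).
Definition qf {n} (Wr Wi : mat n) (y : vec n) : R :=
  \big[Rplus/R0]_(j < n) (lin Wr y j * lin Wr y j + lin Wi y j * lin Wi y j).
Definition bil {n} (Wr Wi : mat n) (y v : vec n) : R :=
  \big[Rplus/R0]_(j < n) (lin Wr y j * lin Wr v j + lin Wi y j * lin Wi v j).
Definition sq {n} (y : vec n) : R := \big[Rplus/R0]_(i < n) (y i * y i).

Section Lyap.
Local Notation C := (R[i]).
Local Notation Re := (@complex.Re R).
Local Notation Im := (@complex.Im R).

Definition yc {n} (y : vec n) : 'rV[C]_n := \row_i (y i)&C.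

Lemma lin_Re n (W : 'M[C]_n) (y : vec n) j :
  lin (fun i j => Re (W i j)) y j = Re ((yc y *m W)%ring (0%ring) j).
Proof.
rewrite /lin mxE Re_sum; apply: eq_bigr => i _; rewrite mxE Re_mulCr. by [].
Qed.

Lemma lin_Im n (W : 'M[C]_n) (y : vec n) j :
  lin (fun i j => Im (W i j)) y j = Im ((yc y *m W)%ring (0%ring) j).
Proof.
rewrite /lin mxE Im_sum; apply: eq_bigr => i _; rewrite mxE Im_mulCr. by [].
Qed.

Lemma rc_sum n (F : 'I_n -> R) : (\big[Rplus/R0]_(i < n) F i)&C = (\sum_(i < n) (F i)&C)%ring.
Proof.
apply: (big_morph (fun r => r&C)) => //.
move=> x y /=. congr Complex. change (0 = 0 + 0). ring.
Qed.

Lemma yc_mulmv n (A : mat n) (y : vec n) : yc (mulmv A y) = (yc y *m Bc A)%ring.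
Proof.
apply/rowP => j; rewrite !mxE /mulmv rc_sum; apply: eq_bigr => i _.
rewrite !mxE rc_mul. congr Complex. change (A j i * y i = y i * A j i). ring.
Qed.

Lemma lyap n (A : mat n) : hurwitz A -> exists be K (Wr Wi : mat n), 0 < be /\ 0 < K /\
  (forall y, sq y <= K * qf Wr Wi y) /\ (forall y, qf Wr Wi y <= K * sq y) /\
  (forall y, bil Wr Wi y (mulmv A y) <= - be * qf Wr Wi y).
Proof.
move=> H.
have [P Pu /allP /= HP] := @cotrigonalization _ n [:: Bc A]
  (fun X Y => ltac:(rewrite !inE => /eqP -> /eqP ->; by [])).
have PT := HP (Bc A) (mem_head _ _).
have Punit := unitarymx_unit Pu.
set T := conjmx P (Bc A) in PT.
have eT : T = (P *m Bc A *m invmx P)%ring by rewrite /T conjumx.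
have PT' : is_trig_mx T := PT.
have Tneg : forall j, Re (T j j) < 0.
  move=> j; have [u u0 eu] := trig_diag_eig _ _ _ _ Punit eT PT' j; apply/RltP; exact: hurwitz_eig _ _ _ _ H u0 eu.
pose s := \big[Rplus/R0]_(j < n) / (- Re (T j j)).
have hs : 0 <= s.
  apply: sum_ge0 => j; apply: Rlt_le; apply: Rinv_0_lt_compat; have := Tneg j; lra.
pose al := / (1 + s).
have al0 : 0 < al by apply: Rinv_0_lt_compat; lra.
have al1 : al <= 1.
  rewrite /al -Rinv_1. apply: Rinv_le_contravar; lra.
have Tdiag : forall j, Re (T j j) <= - al.
  move=> j. have hj := Tneg j.
  have h1 : / (- Re (T j j)) <= s.
    apply: (sum_ge_term _ (fun k => / (- Re (T k k))) j) => k.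
    apply: Rlt_le; apply: Rinv_0_lt_compat; have := Tneg k; lra.
  suff : al <= - Re (T j j) by lra.
  rewrite /al. rewrite -(Rinv_inv (- Re (T j j))).
  apply: Rinv_le_contravar; first by apply: Rinv_0_lt_compat; lra.
  lra.
pose d := dd n T al.
have dpos : forall j, 0 < d j := dd_pos n T al al0.
pose D : 'M[C]_n := diag_mx (\row_j (d j)&C).
pose D' : 'M[C]_n := diag_mx (\row_j (/ d j)&C).
pose W : 'M[C]_n := (invmx P *m D)%ring.
pose Winv : 'M[C]_n := (D' *m P)%ring.
pose Wr : mat n := fun i j => Re (W i j).
pose Wi : mat n := fun i j => Im (W i j).
have DD : (D *m D')%ring = (1%:M)%ring.
  rewrite mulmx_diag -diag_const_mx; congr diag_mx; apply/rowP => j.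
  rewrite !mxE rc_mul. congr Complex. apply: Rinv_r. have := dpos j; lra.
have WW : (W *m Winv)%ring = (1%:M)%ring.
  by rewrite /W /Winv mulmxA -(mulmxA (invmx P)) DD mulmx1 mulVmx.
have [K1 [K1p HK1]] := G2 n n Wr (fun _ _ => 0).
have [K2 [K2p HK2]] := G2 n n Wi (fun _ _ => 0).
have [K3 [K3p HK3]] := G2 n n (fun j i => Re (Winv j i)) (fun j i => - Im (Winv j i)).
have hsq : forall y : vec n, 0 <= sq y by move=> y; apply: sum_ge0 => i; apply: Rle_0_sqr.
have hqf : forall y : vec n, 0 <= qf Wr Wi y.
  move=> y; apply: sum_ge0 => j.
  have := Rle_0_sqr (lin Wr y j); have := Rle_0_sqr (lin Wi y j); rewrite /Rsqr; lra.
have Z0 : \big[Rplus/R0]_(i < n) ((fun _ : 'I_n => 0) i * (fun _ : 'I_n => 0) i) = 0.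
  rewrite (sum_ext _ _ (fun _ => 0 * 0)) //. rewrite sum_const; ring.
have up1 : forall y : vec n, \big[Rplus/R0]_(j < n) (lin Wr y j * lin Wr y j) <= K1 * sq y.
  move=> y; have := HK1 y (fun _ => 0); rewrite Z0 Rplus_0_r.
  rewrite (sum_ext _ _ (fun j => lin Wr y j * lin Wr y j)) //.
  move=> j; rewrite (sum_ext _ _ (fun i => y i * Wr i j)) //. move=> i; ring.
have up2 : forall y : vec n, \big[Rplus/R0]_(j < n) (lin Wi y j * lin Wi y j) <= K2 * sq y.
  move=> y; have := HK2 y (fun _ => 0); rewrite Z0 Rplus_0_r.
  rewrite (sum_ext _ _ (fun j => lin Wi y j * lin Wi y j)) //.
  move=> j; rewrite (sum_ext _ _ (fun i => y i * Wi i j)) //. move=> i; ring.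
have yrec : forall (y : vec n) i, y i = \big[Rplus/R0]_(j < n)
     (lin Wr y j * Re (Winv j i) + lin Wi y j * - Im (Winv j i)).
  move=> y i.
  have e1 : y i = Re ((yc y *m W *m Winv)%ring (0%ring) i).
    by rewrite -mulmxA WW mulmx1 mxE.
  rewrite e1 mxE Re_sum; apply: eq_bigr => j _.
  rewrite (lin_Re n W y j) (lin_Im n W y j).
  case: ((yc y *m W)%ring (0%ring) j) => a b; case: (Winv j i) => c e /=.
  change (a * c - b * e = a * c + b * - e). ring.
have low : forall y : vec n, sq y <= K3 * qf Wr Wi y.
  move=> y; have := HK3 (lin Wr y) (lin Wi y).
  rewrite -sum_split.
  have -> : \big[Rplus/R0]_(j < n) ((lin Wr y j * lin Wr y j) + (lin Wi y j * lin Wi y j)) = qf Wr Wi y by [].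
  rewrite /sq (sum_ext _ (fun i => y i * y i) (fun i => (\big[Rplus/R0]_(j < n)
     (lin Wr y j * Re (Winv j i) + lin Wi y j * - Im (Winv j i))) * (\big[Rplus/R0]_(j < n)
     (lin Wr y j * Re (Winv j i) + lin Wi y j * - Im (Winv j i))))) //.
  move=> i; by rewrite -!yrec.
exists (al / 2), (K1 + K2 + K3), Wr, Wi; split; first lra.
split; first lra.
split.
  move=> y; have h1 := low y; have h2 := hqf y.
  have : 0 <= (K1 + K2) * qf Wr Wi y by apply: Rmult_le_pos; lra.
  lra.
split.
  move=> y; have h1 := up1 y; have h2 := up2 y; have h3 := hsq y.
  have : 0 <= K3 * sq y by apply: Rmult_le_pos; lra.
  rewrite /qf sum_split. lra.
move=> y.
pose z := (yc y *m invmx P)%ring.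
have Ew : forall j, (yc y *m W)%ring (0%ring) j = (z 0 j * (d j)&C)%ring.
  by move=> j; rewrite /W mulmxA mul_mx_diag !mxE.
have Ev : forall j, (yc (mulmv A y) *m W)%ring (0%ring) j = ((z *m T)%ring 0 j * (d j)&C)%ring.
  move=> j; rewrite yc_mulmv /W.
  have -> : (yc y *m Bc A *m (invmx P *m D))%ring = (z *m T *m D)%ring.
    rewrite /z eT !mulmxA. congr (_ *m _)%ring.
    by rewrite -!mulmxA mulKmx // mulmxA.
  by rewrite mul_mx_diag !mxE.
have eb : bil Wr Wi y (mulmv A y) = \big[Rplus/R0]_(j < n) rdot (z 0 j * (d j)&C)%ring ((z *m T)%ring 0 j * (d j)&C)%ring.
  apply: sum_ext => j. rewrite (lin_Re n W y j) (lin_Im n W y j).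
  rewrite (lin_Re n W (mulmv A y) j) (lin_Im n W (mulmv A y) j) Ew Ev. by [].
have eq : qf Wr Wi y = \big[Rplus/R0]_(j < n) Nc (z 0 j * (d j)&C)%ring.
  apply: sum_ext => j. rewrite (lin_Re n W y j) (lin_Im n W y j) Ew. by [].
rewrite eb eq. exact: core.
Qed.

End Lyap.

End AlgPart.
Import AlgPart.

Open Scope R_scope.


Section Norm.
Variables (n : nat) (nrm : vec n -> R).
Hypothesis Hn : is_norm nrm.

Lemma nrm_ge0 x : 0 <= nrm x. Proof. case: Hn => h _; exact: h. Qed.

Lemma nrm_scal a x : nrm (fun i => a * x i) = Rabs a * nrm x.
Proof. case: Hn => _ [_ [h _]]; exact: h. Qed.

Lemma nrm_tri x y : nrm (fun i => x i + y i) <= nrm x + nrm y.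
Proof. case: Hn => _ [_ [_ h]]; exact: h. Qed.

Lemma nrm_eq0 x : nrm x = 0 -> forall i, x i = 0.
Proof. case: Hn => _ [h _]; exact: h. Qed.

Lemma nrm0 : nrm (fun _ => 0) = 0.
Proof.
have e : (fun _ : 'I_n => 0) = (fun i => 0 * (fun _ => 0) i).
  apply: functional_extensionality => i /=; ring.
rewrite e nrm_scal Rabs_R0; ring.
Qed.

Lemma nrm_opp x : nrm (fun i => - x i) = nrm x.
Proof.
have e : (fun i => - x i) = (fun i => -1 * x i).
  apply: functional_extensionality => i /=; ring.
rewrite e nrm_scal Rabs_Ropp Rabs_R1; ring.
Qed.

Lemma nrm_subC x y : nrm (fun i => x i - y i) = nrm (fun i => y i - x i).
Proof.
rewrite -nrm_opp. congr nrm; apply: functional_extensionality => i; ring.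
Qed.

Lemma nrm_tri3 x y z : nrm (fun i => x i - z i) <= nrm (fun i => x i - y i) + nrm (fun i => y i - z i).
Proof.
have e : (fun i => x i - z i) = (fun i => (fun i => x i - y i) i + (fun i => y i - z i) i).
  apply: functional_extensionality => i /=; ring.
rewrite e; exact: nrm_tri.
Qed.

Lemma nrm_sum m (F : 'I_m -> vec n) :
  nrm (fun k => \big[Rplus/R0]_(i < m) F i k) <= \big[Rplus/R0]_(i < m) nrm (F i).
Proof.
elim: m F => [|m IH] F.
  have e : (fun k : 'I_n => \big[Rplus/R0]_(i < 0) F i k) = (fun _ => 0).
    apply: functional_extensionality => k; by rewrite big_ord0.
  rewrite e nrm0 big_ord0; lra.
have e : (fun k => \big[Rplus/R0]_(i < m.+1) F i k) =
  (fun k => (fun k => \big[Rplus/R0]_(i < m) F (widen_ord (leqnSn m) i) k) k + F ord_max k).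
  apply: functional_extensionality => k. by rewrite big_ord_recr.
rewrite e big_ord_recr /=.
apply: (Rle_trans _ _ _ (nrm_tri _ _)).
apply: Rplus_le_compat_r; exact: (IH (fun i => F (widen_ord (leqnSn m) i))).
Qed.

Definition ev (j : 'I_n) : vec n := fun k => if k == j then 1 else 0.

Lemma nrm_decomp y : nrm y <= \big[Rplus/R0]_(i < n) (Rabs (y i) * nrm (ev i)).
Proof.
have e : y = (fun k => \big[Rplus/R0]_(i < n) (fun i k => y i * ev i k) i k).
  apply: functional_extensionality => k.
  rewrite (bigD1 k) //= big1 /ev ?eqxx; first ring.
  move=> i /negbTE; rewrite eq_sym => ->; ring.
rewrite {1}e. apply: (Rle_trans _ _ _ (nrm_sum _ _)).
apply: sum_le => i. rewrite nrm_scal; lra.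
Qed.

Lemma abs_le_sqrt_sq (y : vec n) i : Rabs (y i) <= sqrt (sq y).
Proof.
rewrite -sqrt_Rsqr_abs; apply: sqrt_le_1_alt; rewrite /Rsqr /sq.
exact: (sum_ge_term _ (fun k => y k * y k) i (fun k => Rle_0_sqr (y k))).
Qed.

Lemma sq_ge0 (y : vec n) : 0 <= sq y.
Proof. apply: sum_ge0 => i; apply: Rle_0_sqr. Qed.

Lemma nrm_up : exists C, 0 < C /\ forall y, nrm y * nrm y <= C * sq y.
Proof.
pose E := \big[Rplus/R0]_(i < n) nrm (ev i).
have hE : 0 <= E by apply: sum_ge0 => i; exact: nrm_ge0.
exists (1 + E * E); split; first by have := Rle_0_sqr E; rewrite /Rsqr; lra.
move=> y.
have h1 : nrm y <= sqrt (sq y) * E.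
  apply: (Rle_trans _ _ _ (nrm_decomp y)).
  rewrite /E -sum_scal; apply: sum_le => i.
  apply: Rmult_le_compat_r; [exact: nrm_ge0 | exact: abs_le_sqrt_sq].
have h0 := nrm_ge0 y. have hs := sqrt_pos (sq y). have hq := sq_ge0 y.
have h2 : nrm y * nrm y <= (sqrt (sq y) * E) * (sqrt (sq y) * E).
  apply: Rmult_le_compat; lra.
have e : sqrt (sq y) * E * (sqrt (sq y) * E) = (sqrt (sq y) * sqrt (sq y)) * (E * E) by ring.
rewrite e sqrt_sqrt // in h2.
have : 0 <= sq y by [].
nra.
Qed.

Definition Supp (k : nat) (y : vec n) := forall i : 'I_n, (k <= i)%nat -> y i = 0.

Lemma fin_event (P : 'I_n -> nat -> Prop) :
  (forall i, exists N, forall m, (N <= m)%nat -> P i m) ->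
  exists N, forall m, (N <= m)%nat -> forall i, P i m.
Proof.
move=> H.
pose Nf i := proj1_sig (constructive_indefinite_description _ (H i)).
exists (\max_(i < n) Nf i) => m hm i.
apply: (proj2_sig (constructive_indefinite_description _ (H i))).
apply: (leq_trans _ hm). exact: leq_bigmax.
Qed.

Lemma eq0_of_small x : 0 <= x -> (forall e, 0 < e -> x < e) -> x = 0.
Proof.
move=> h0 h. apply: Rle_antisym => //. apply: Rnot_lt_le => hx.
have := h x hx. lra.
Qed.

Lemma cv_const0 (u : nat -> R) l : (forall m, u m = 0) -> Un_cv u l -> l = 0.
Proof.
move=> h hc. apply: NNPP => hl.
have hp : Rabs l > 0 by apply: Rabs_pos_lt.
have [N HN] := hc _ hp. have := HN N (le_n N). rewrite /Rdist h Rminus_0_l Rabs_Ropp. lra.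
Qed.

Lemma inv_succ_pos m : 0 < / INR (S m).
Proof. apply: Rinv_0_lt_compat; apply: lt_0_INR; lia. Qed.

Lemma inv_succ_le N m : (N <= m)%nat -> / INR (S m) <= / INR (S N).
Proof.
move=> /leP h. apply: Rinv_le_contravar; first by apply: lt_0_INR; lia.
apply: le_INR; lia.
Qed.

Section Low.
Variables (k : nat) (Hk : (k < n)%nat) (c : R).
Hypothesis hc : 0 < c.
Hypothesis IH : forall y, Supp k y -> sq y <= c * (nrm y * nrm y).
Let kk : 'I_n := Ordinal Hk.

Lemma abs_coord_le (y : vec n) i : Supp k y -> Rabs (y i) <= sqrt c * nrm y.
Proof.
move=> Sy. apply: (Rle_trans _ _ _ (abs_le_sqrt_sq y i)).
have h := IH y Sy. have h0 := nrm_ge0 y.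
rewrite -(sqrt_Rsqr (nrm y)) // -sqrt_mult; [|lra|apply: Rle_0_sqr].
apply: sqrt_le_1_alt. by rewrite /Rsqr.
Qed.

Lemma delta_pos : exists d, 0 < d /\ forall w, Supp k w -> d <= nrm (fun i => ev kk i - w i).
Proof.
apply: NNPP => Hno.
have Hall : forall m : nat, exists w, Supp k w /\ nrm (fun i => ev kk i - w i) < / INR (S m).
  move=> m; apply: NNPP => h; apply: Hno; exists (/ INR (S m)); split; first exact: inv_succ_pos.
  move=> w Sw; apply: Rnot_lt_le => hl; apply: h; exists w; split => //.
pose ws m := proj1_sig (constructive_indefinite_description _ (Hall m)).
have hws : forall m, Supp k (ws m) /\ nrm (fun i => ev kk i - ws m i) < / INR (S m).
  move=> m; exact: (proj2_sig (constructive_indefinite_description _ (Hall m))).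
have Cau : forall i, Cauchy_crit (fun m => ws m i).
  move=> i eps he.
  have hsc : 0 < sqrt c by apply: sqrt_lt_R0.
  have [N [hN hN0]] := archimed_cor1 (eps / (2 * sqrt c)) ltac:(apply: Rdiv_lt_0_compat; lra).
  exists N => a b ha hb. rewrite /Rdist.
  have Sab : Supp k (fun j => ws a j - ws b j).
    move=> j hj; have [Sa _] := hws a; have [Sb _] := hws b; rewrite Sa // Sb //; ring.
  have h1 := abs_coord_le _ i Sab.
  have h2 := nrm_tri3 (ws a) (ev kk) (ws b).
  rewrite (nrm_subC (ws a) (ev kk)) in h2.
  have [_ ha'] := hws a; have [_ hb'] := hws b.
  have hNa : / INR (S a) <= / INR N.
    apply: Rinv_le_contravar; last by apply: le_INR; lia.
    exact: lt_0_INR.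
  have hNb : / INR (S b) <= / INR N.
    apply: Rinv_le_contravar; last by apply: le_INR; lia.
    exact: lt_0_INR.
  have h3 : nrm (fun j => ws a j - ws b j) < 2 * / INR N by lra.
  have h4 : sqrt c * nrm (fun j => ws a j - ws b j) < sqrt c * (2 * / INR N).
    by apply: Rmult_lt_compat_l.
  have h5 : sqrt c * (2 * / INR N) < eps.
    have -> : eps = sqrt c * (2 * (eps / (2 * sqrt c))) by field; lra.
    apply: Rmult_lt_compat_l => //; lra.
  lra.
pose wl i := proj1_sig (R_complete _ (Cau i)).
have hwl : forall i, Un_cv (fun m => ws m i) (wl i).
  move=> i; exact: (proj2_sig (R_complete _ (Cau i))).
have Swl : Supp k wl.
  move=> i hi; apply: (cv_const0 (fun m => ws m i)) (hwl i) => m.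
  have [Sm _] := hws m; exact: Sm i hi.
have zero : nrm (fun i => ev kk i - wl i) = 0.
  apply: eq0_of_small; first exact: nrm_ge0.
  move=> e he.
  pose SS := \big[Rplus/R0]_(i < n) nrm (ev i).
  have hS : 0 <= SS by apply: sum_ge0 => i; exact: nrm_ge0.
  pose E := 1 + SS.
  have hE : 0 < E by rewrite /E; lra.
  have heE : 0 < e / (2 * E) by apply: Rdiv_lt_0_compat; lra.
  have [N1 HN1] : exists N1, forall m, (N1 <= m)%nat -> forall i, Rabs (ws m i - wl i) < e / (2 * E).
    apply: fin_event => i. have [N HN] := hwl i _ heE. exists N => m /leP hm. exact: HN m hm.
  have [N2 [hN2 hN20]] := archimed_cor1 (e / 2) ltac:(lra).
  pose m := maxn N1 N2.
  have h1 := nrm_tri3 (ev kk) (ws m) wl.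
  have [_ h2] := hws m.
  have h3 : / INR (S m) <= / INR N2.
    apply: Rinv_le_contravar; first exact: lt_0_INR.
    apply: le_INR. have : (N2 <= m)%nat by rewrite /m leq_maxr. move/leP. lia.
  have h4 := nrm_decomp (fun i => ws m i - wl i).
  have h5 : \big[Rplus/R0]_(i < n) (Rabs (ws m i - wl i) * nrm (ev i)) <= e / (2 * E) * SS.
    rewrite /SS -sum_scal; apply: sum_le => i. apply: Rmult_le_compat_r; first exact: nrm_ge0.
    apply: Rlt_le; apply: HN1; by rewrite /m leq_maxl.
  have h6 : e / (2 * E) * SS < e / 2.
    have -> : e / (2 * E) * SS = (e / 2) * (SS / E) by field; lra.
    rewrite -{2}(Rmult_1_r (e / 2)). apply: Rmult_lt_compat_l; first lra.
    apply: (Rmult_lt_reg_r E) => //. rewrite /Rdiv Rmult_assoc Rinv_l. rewrite /E; lra. lra.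
  lra.
have := nrm_eq0 _ zero kk. rewrite /ev eqxx Swl //=. lra.
Qed.

Lemma low_step : exists c', 0 < c' /\ forall y, Supp k.+1 y -> sq y <= c' * (nrm y * nrm y).
Proof.
have [d [hd Hd]] := delta_pos.
pose E := nrm (ev kk).
have hE : 0 <= E := nrm_ge0 (ev kk).
have hEd : 0 <= E / d by apply: Rmult_le_pos => //; apply: Rlt_le; apply: Rinv_0_lt_compat.
exists (c * ((1 + E / d) * (1 + E / d)) + / d * / d); split.
  have : 0 < / d * / d by apply: Rmult_lt_0_compat; apply: Rinv_0_lt_compat.
  have : 0 < c * ((1 + E / d) * (1 + E / d)) by apply: Rmult_lt_0_compat => //; apply: Rmult_lt_0_compat; lra.
  lra.
move=> y Sy.
pose t := y kk. pose w := fun i => if i == kk then 0 else y i.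
have Sw : Supp k w.
  move=> i hi; rewrite /w; case: eqP => // ne; apply: Sy.
  have ne' : (i : nat) != k by apply/eqP => h; apply: ne; apply: val_inj.
  by rewrite ltn_neqAle eq_sym ne' hi.
have ysplit : forall i, y i = w i + t * ev kk i.
  move=> i; rewrite /w /ev /t; case: eqP => [-> | _]; ring.
have e1 : sq y = y kk * y kk + \big[Rplus/R0]_(i < n | i != kk) (y i * y i).
  by rewrite /sq (bigD1 kk).
have e2 : sq w = \big[Rplus/R0]_(i < n | i != kk) (y i * y i).
  rewrite /sq (bigD1 kk) //= {1 2}/w eqxx Rmult_0_l Rplus_0_l.
  apply: eq_bigr => i /negbTE hi; by rewrite /w hi.
have hsq : sq y = sq w + t * t by rewrite e1 e2 /t; ring.
have ha : Rabs t * d <= nrm y.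
  case: (Req_dec t 0) => [-> | tn0].
    rewrite Rabs_R0; have := nrm_ge0 y; lra.
  pose w' := fun i => - / t * w i.
  have Sw' : Supp k w' by move=> i hi; rewrite /w' Sw //; ring.
  have ey : y = (fun i => t * (fun i => ev kk i - w' i) i).
    apply: functional_extensionality => i /=. rewrite {1}ysplit /w'. field. exact: tn0.
  rewrite ey nrm_scal. apply: Rmult_le_compat_l; first exact: Rabs_pos.
  exact: Hd.
have hw : nrm w <= nrm y + Rabs t * E.
  have ew : w = (fun i => y i + (fun i => (- t) * ev kk i) i).
    apply: functional_extensionality => i /=. rewrite (ysplit i); ring.
  rewrite ew. apply: (Rle_trans _ _ _ (nrm_tri _ _)). rewrite nrm_scal Rabs_Ropp /E; lra.
set N := nrm y in ha hw *. set a := Rabs t in ha hw.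
have hN : 0 <= N := nrm_ge0 y. have ha0 : 0 <= a := Rabs_pos t.
have hw0 : 0 <= nrm w := nrm_ge0 w.
have had : a <= N / d.
  apply: (Rmult_le_reg_r d) => //. rewrite /Rdiv Rmult_assoc Rinv_l; lra.
have hw2 : nrm w <= N * (1 + E / d).
  have : a * E <= N / d * E by apply: Rmult_le_compat_r.
  have -> : N * (1 + E / d) = N + N / d * E by rewrite /Rdiv; ring.
  lra.
have hsqw := IH w Sw.
have h1 : nrm w * nrm w <= (N * (1 + E / d)) * (N * (1 + E / d)) by apply: Rmult_le_compat.
have h2 : t * t <= (N / d) * (N / d).
  have -> : t * t = a * a by rewrite /a -Rabs_mult Rabs_right //; apply: Rle_ge; apply: Rle_0_sqr.
  by apply: Rmult_le_compat.
have h3 : c * (nrm w * nrm w) <= c * ((N * (1 + E / d)) * (N * (1 + E / d))).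
  by apply: Rmult_le_compat_l; lra.
rewrite hsq.
have -> : (c * ((1 + E / d) * (1 + E / d)) + / d * / d) * (N * N) =
   c * ((N * (1 + E / d)) * (N * (1 + E / d))) + (N / d) * (N / d) by rewrite /Rdiv; ring.
lra.
Qed.
End Low.

Lemma nrm_low : exists c, 0 < c /\ forall y, sq y <= c * (nrm y * nrm y).
Proof.
have gen : forall k, (k <= n)%nat -> exists c, 0 < c /\ forall y, Supp k y -> sq y <= c * (nrm y * nrm y).
  elim => [_|k IHk hk].
    exists 1; split; first lra.
    move=> y Sy. rewrite /sq big1; last by move=> i _; rewrite Sy //; ring.
    apply: Rmult_le_pos; [lra | apply: Rle_0_sqr].
  have [c [hc H]] := IHk (ltnW hk).
  exact: (low_step k hk c hc H).
have [c [hc H]] := gen n (leqnn n).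
exists c; split => // y; apply: H => i hi.
by have := ltn_ord i; rewrite ltnNge hi.
Qed.
End Norm.

Open Scope R_scope.


Notation dpl := derivable_pt_lim.

Lemma dpl_plus f g t a b : dpl f t a -> dpl g t b -> dpl (fun s => f s + g s) t (a + b).
Proof. exact: derivable_pt_lim_plus. Qed.
Lemma dpl_mult f g t a b : dpl f t a -> dpl g t b -> dpl (fun s => f s * g s) t (a * g t + f t * b).
Proof. exact: derivable_pt_lim_mult. Qed.
Lemma dpl_const c t : dpl (fun _ => c) t 0.
Proof. exact: derivable_pt_lim_const. Qed.
Lemma dpl_explin k t : dpl (fun s => exp (k * s)) t (k * exp (k * t)).
Proof.
have h1 : dpl (fun s => k * s) t k.
  have := derivable_pt_lim_scal id k t 1 (derivable_pt_lim_id t). rewrite Rmult_1_r. exact.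
have := derivable_pt_lim_comp (fun s => k * s) exp t k _ h1 (derivable_pt_lim_exp (k * t)).
rewrite Rmult_comm. exact.
Qed.
Lemma dpl_sum n (F : 'I_n -> R -> R) (dF : 'I_n -> R) t :
  (forall i, dpl (F i) t (dF i)) ->
  dpl (fun s => \big[Rplus/R0]_(i < n) F i s) t (\big[Rplus/R0]_(i < n) dF i).
Proof.
elim: n F dF => [|n IH] F dF H.
  have -> : (fun s => \big[Rplus/R0]_(i < 0) F i s) = (fun _ => 0).
    by apply: functional_extensionality => s; rewrite big_ord0.
  rewrite big_ord0. exact: dpl_const.
have -> : (fun s => \big[Rplus/R0]_(i < n.+1) F i s) =
   (fun s => \big[Rplus/R0]_(i < n) F (widen_ord (leqnSn n) i) s + F ord_max s).
  by apply: functional_extensionality => s; rewrite big_ord_recr.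
rewrite big_ord_recr /=. apply: dpl_plus; last exact: H.
exact: (IH (fun i => F (widen_ord (leqnSn n) i)) (fun i => dF (widen_ord (leqnSn n) i))).
Qed.

Lemma dpl_loc f g t l d : 0 < d -> (forall s, Rabs (s - t) < d -> f s = g s) -> dpl f t l -> dpl g t l.
Proof.
move=> hd he hf eps heps.
have [del hdel] := hf eps heps.
have hdp : 0 < Rmin del d by apply: Rmin_pos => //; exact: (cond_pos del).
exists (mkposreal _ hdp) => h hh0 hh /=.
rewrite -!he; first apply: hdel => //.
- apply: (Rlt_le_trans _ _ _ hh); exact: Rmin_l.
- rewrite Rminus_diag Rabs_R0; lra.
- have : Rabs h < d by apply: (Rlt_le_trans _ _ _ hh); exact: Rmin_r.
  by have -> : t + h - t = h by ring.
Qed.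

Notation cpt := continuity_pt.
Lemma cpt_plus f g t : cpt f t -> cpt g t -> cpt (fun s => f s + g s) t.
Proof. exact: continuity_pt_plus. Qed.
Lemma cpt_mult f g t : cpt f t -> cpt g t -> cpt (fun s => f s * g s) t.
Proof. exact: continuity_pt_mult. Qed.
Lemma cpt_const c t : cpt (fun _ => c) t.
Proof. by apply: continuity_pt_const => x y. Qed.
Lemma cpt_explin k t : cpt (fun s => exp (k * s)) t.
Proof. apply: derivable_continuous_pt. exists (k * exp (k * t)). exact: dpl_explin. Qed.
Lemma cpt_sum n (F : 'I_n -> R -> R) t :
  (forall i, cpt (F i) t) -> cpt (fun s => \big[Rplus/R0]_(i < n) F i s) t.
Proof.
elim: n F => [|n IH] F H.
  have -> : (fun s => \big[Rplus/R0]_(i < 0) F i s) = (fun _ => 0).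
    by apply: functional_extensionality => s; rewrite big_ord0.
  exact: cpt_const.
have -> : (fun s => \big[Rplus/R0]_(i < n.+1) F i s) =
   (fun s => \big[Rplus/R0]_(i < n) F (widen_ord (leqnSn n) i) s + F ord_max s).
  by apply: functional_extensionality => s; rewrite big_ord_recr.
apply: cpt_plus; last exact: H.
exact: (IH (fun i => F (widen_ord (leqnSn n) i))).
Qed.

Open Scope R_scope.


Lemma cpt_eps f t : cpt f t -> forall e, 0 < e -> exists d, 0 < d /\
  forall s, Rabs (s - t) < d -> Rabs (f s - f t) < e.
Proof.
move=> hc e he. have [d [hd H]] := hc e he.
exists d; split => // s hs.
case: (Req_dec s t) => [-> | hst].
  rewrite Rminus_diag Rabs_R0; lra.
exact: (H s (conj (conj I (not_eq_sym hst)) hs)).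
Qed.

Lemma dpl_eq f t l l' : l = l' -> dpl f t l -> dpl f t l'.
Proof. by move=> ->. Qed.

Lemma mono_deriv F F' a b : a < b ->
  (forall c, a < c < b -> dpl F c (F' c)) -> (forall c, a < c < b -> F' c <= 0) ->
  cpt F a -> cpt F b -> F b <= F a.
Proof.
move=> hab hd hn ca cb.
have mono : forall u v, a < u -> u < v -> v < b -> F v <= F u.
  move=> u v hu huv hv.
  have [c [ec hc]] := MVT_cor2 F F' u v huv (fun c hc => hd c ltac:(lra)).
  have := hn c ltac:(lra). have : 0 < v - u by lra. nra.
apply: Rnot_lt_le => hlt.
pose e := (F b - F a) / 3.
have he : 0 < e by rewrite /e; lra.
have [da [hda Ha]] := cpt_eps _ _ ca e he.
have [db [hdb Hb]] := cpt_eps _ _ cb e he.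
pose ra := Rmin da ((b - a) / 2). pose rb := Rmin db ((b - a) / 2).
have hra : 0 < ra by apply: Rmin_pos; lra.
have hrb : 0 < rb by apply: Rmin_pos; lra.
have ra1 : ra <= (b - a) / 2 := Rmin_r _ _. have ra2 : ra <= da := Rmin_l _ _.
have rb1 : rb <= (b - a) / 2 := Rmin_r _ _. have rb2 : rb <= db := Rmin_l _ _.
pose u := a + ra / 2. pose v := b - rb / 2.
have h1 := mono u v ltac:(rewrite /u; lra) ltac:(rewrite /u /v; lra) ltac:(rewrite /v; lra).
have h2 := Ha u ltac:(rewrite /u Rabs_right; lra).
have h3 := Hb v ltac:(rewrite /v Rabs_left; lra).
move: h2 h3. rewrite /e. move=> /Rabs_def2 [h2 h2'] /Rabs_def2 [h3 h3']. lra.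
Qed.

Lemma lin_scal n (W : mat n) (v : vec n) c j : lin W (fun i => c * v i) j = c * lin W v j.
Proof. rewrite /lin -sum_scal; apply: sum_ext => i; ring. Qed.

Lemma bil_scal n (Wr Wi : mat n) y v c : bil Wr Wi y (fun i => c * v i) = c * bil Wr Wi y v.
Proof. rewrite /bil -sum_scal; apply: sum_ext => j; rewrite !lin_scal; ring. Qed.

Lemma dpl_lin n (W : mat n) (X : R -> vec n) (X' : vec n) t j :
  (forall i, dpl (fun s => X s i) t (X' i)) -> dpl (fun s => lin W (X s) j) t (lin W X' j).
Proof.
move=> H.
apply: dpl_eq; last first.
  apply: (dpl_sum n (fun i s => X s i * W i j)) => i.
  exact: (dpl_mult _ _ t _ _ (H i) (dpl_const (W i j) t)).
rewrite /lin; apply: sum_ext => i /=; ring.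
Qed.

Lemma dpl_qf n (Wr Wi : mat n) (X : R -> vec n) (X' : vec n) t :
  (forall i, dpl (fun s => X s i) t (X' i)) ->
  dpl (fun s => qf Wr Wi (X s)) t (2 * bil Wr Wi (X t) X').
Proof.
move=> H.
apply: dpl_eq; last first.
  apply: (dpl_sum n (fun j s => lin Wr (X s) j * lin Wr (X s) j + lin Wi (X s) j * lin Wi (X s) j)) => j.
  apply: dpl_plus; apply: dpl_mult; exact: dpl_lin.
rewrite /bil -sum_scal; apply: sum_ext => j /=; ring.
Qed.

Lemma cpt_qf n (Wr Wi : mat n) (X : R -> vec n) t :
  (forall i, cpt (fun s => X s i) t) -> cpt (fun s => qf Wr Wi (X s)) t.
Proof.
move=> H.
have hl : forall W j, cpt (fun s => lin W (X s) j) t.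
  move=> W j; apply: (cpt_sum n (fun i s => X s i * W i j)) => i.
  apply: cpt_mult => //; exact: cpt_const.
apply: (cpt_sum n (fun j s => lin Wr (X s) j * lin Wr (X s) j + lin Wi (X s) j * lin Wi (X s) j)) => j.
apply: cpt_plus; apply: cpt_mult; exact: hl.
Qed.

Open Scope R_scope.


Definition xe {n} (x : R -> vec n) : R -> vec n := fun s => x (Rmax 0 s).

Lemma xe_eq n (x : R -> vec n) s : 0 <= s -> xe x s = x s.
Proof. by move=> h; rewrite /xe Rmax_right. Qed.

Section Sol.
Variables (n p : nat) (M : 'I_p -> mat n) (g : R) (sigma : R -> 'I_p) (x : R -> vec n).
Hypothesis Hsol : solution g M sigma x.

Lemma xe_cont i t : 0 <= t -> cpt (fun s => xe x s i) t.
Proof.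
move=> ht; case: Hsol => Hc _.
rewrite /continuity_pt /continue_in /limit1_in /limit_in => eps he.
have [d [hd Hd]] := Hc i t ht eps he.
exists d; split => // s [_ hs]. simpl in hs |- *. rewrite /R_dist in hs |- *.
rewrite /xe (Rmax_right 0 t ht). apply: Hd; first exact: Rmax_l.
case: (Rle_dec 0 s) => hs0.
  by rewrite Rmax_right.
rewrite Rmax_left; last lra.
move: hs; rewrite Rabs_left; last lra. rewrite Rminus_0_l Rabs_Ropp Rabs_right; lra.
Qed.

Lemma xe_deriv t : 0 < t -> ~ discontinuity sigma t ->
  forall i, dpl (fun s => xe x s i) t (g * mulmv (M (sigma t)) (xe x t) i).
Proof.
move=> ht hnd i; case: Hsol => _ Hd.
rewrite xe_eq; last lra.
apply: (dpl_loc (fun s => x s i) _ t _ t) => //; last exact: Hd.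
move=> s hs. rewrite /xe Rmax_right //.
move: hs => /Rabs_def2 [h1 h2]; lra.
Qed.

Lemma interval_decay k (Wr Wi : mat n) be a b :
  0 <= g -> 0 <= a -> a < b ->
  (forall s, a < s < b -> sigma s = k) ->
  (forall y, bil Wr Wi y (mulmv (M k) y) <= - be * qf Wr Wi y) ->
  qf Wr Wi (x b) * exp (2 * be * g * b) <= qf Wr Wi (x a) * exp (2 * be * g * a).
Proof.
move=> hg ha hab hk hL.
pose ka := 2 * be * g.
pose F s := qf Wr Wi (xe x s) * exp (ka * s).
pose F' s := (2 * bil Wr Wi (xe x s) (fun i => g * mulmv (M k) (xe x s) i)) * exp (ka * s)
   + qf Wr Wi (xe x s) * (ka * exp (ka * s)).
have nd : forall s, a < s < b -> ~ discontinuity sigma s.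
  move=> s hs [_ hnlc]; apply: hnlc.
  exists (Rmin (s - a) (b - s)); split; first by apply: Rmin_pos; lra.
  move=> s' _ hs'. have h1 := Rmin_l (s - a) (b - s). have h2 := Rmin_r (s - a) (b - s).
  move: hs' => /Rabs_def2 [h3 h4].
  rewrite !hk //; lra.
have : F b <= F a.
  apply: (mono_deriv F F' a b hab).
  - move=> c hc. apply: dpl_mult; last exact: dpl_explin.
    apply: dpl_qf => i.
    have := xe_deriv c ltac:(lra) (nd c hc) i. by rewrite hk.
  - move=> c hc. rewrite /F' bil_scal.
    set B := bil _ _ _ _. set q := qf _ _ _. set e := exp (ka * c).
    have he : 0 < e := exp_pos _.
    have h1 : g * B <= g * (- be * q) := Rmult_le_compat_l _ _ _ hg (hL _).
    have -> : 2 * (g * B) * e + q * (ka * e) = 2 * e * (g * B + be * g * q) by rewrite /ka; ring.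
    have : g * B + be * g * q <= 0 by lra.
    have : 0 < 2 * e by lra.
    nra.
  - apply: cpt_mult; last exact: cpt_explin.
    apply: cpt_qf => i; apply: xe_cont; lra.
  - apply: cpt_mult; last exact: cpt_explin.
    apply: cpt_qf => i; apply: xe_cont; lra.
rewrite /F !xe_eq; [|lra|lra]. by rewrite /ka.
Qed.
End Sol.

Open Scope R_scope.


Section Const.
Variables (P : Type) (sigma : R -> P).
Hypothesis Hrc : forall t, 0 <= t -> exists d, 0 < d /\ forall s, t <= s < t + d -> sigma s = sigma t.

Lemma const_between a b : 0 <= a -> a < b ->
  (forall s, a < s < b -> ~ discontinuity sigma s) ->
  forall s, a <= s < b -> sigma s = sigma a.
Proof.
move=> ha hab hnd.
pose E u := a <= u <= b /\ forall v, a <= v < u -> sigma v = sigma a.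
have hb : bound E by exists b => u [[_ h] _].
have hex : exists u, E u by exists a; split; [lra | move=> v hv; lra].
have [m [mub mlub]] := completeness E hb hex.
have ham : a <= m by apply: mub; split; [lra | move=> v hv; lra].
have hmb : m <= b by apply: mlub => u [[_ h] _].
have below : forall v, a <= v < m -> sigma v = sigma a.
  move=> v hv; apply: NNPP => hne.
  have : m <= v.
    apply: mlub => u [hu Hu]. apply: Rnot_lt_le => hvu. apply: hne. apply: Hu; lra.
  lra.
have mb : m = b.
  apply: NNPP => hne. have hmb' : m < b by lra.
  have hsm : sigma m = sigma a.
    case: (Req_dec m a) => [-> // | hma].
    have hlc : locally_constant_at sigma m.
      apply: NNPP => hnl; apply: (hnd m); [lra | split; [lra | exact: hnl]].
    have [d [hd Hd]] := hlc.
    pose v := Rmax a (m - d / 2).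
    have hv1 : a <= v := Rmax_l _ _. have hv2 : m - d / 2 <= v := Rmax_r _ _.
    have hv3 : v < m by rewrite /v; apply: Rmax_lub_lt; lra.
    have e1 := below v (conj hv1 hv3).
    have e2 : sigma v = sigma m.
      apply: Hd; first lra. rewrite Rabs_left; lra.
    by rewrite -e2 e1.
  have [d [hd Hd]] := Hrc m ltac:(lra).
  pose u := Rmin (m + d / 2) b.
  have hu1 : u <= m + d / 2 := Rmin_l _ _. have hu2 : u <= b := Rmin_r _ _.
  have hu3 : m < u by rewrite /u; apply: Rmin_glb_lt; lra.
  have Eu : E u.
    split; first lra.
    move=> v hv. case: (Rlt_le_dec v m) => hvm; first by apply: below; lra.
    rewrite Hd; [exact: hsm | lra].
  have := mub u Eu. lra.
move=> s hs; apply: below; lra.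
Qed.
End Const.

Lemma list_max (L : list R) : L <> nil -> exists m, List.In m L /\ forall u, List.In u L -> u <= m.
Proof.
elim: L => [//|a L IH] _.
case: L IH => [|b L] IH.
  exists a; split; first by left. by move=> u [-> | []]; lra.
have [m [hm Hm]] := IH ltac:(discriminate).
case: (Rle_dec a m) => ham.
  exists m; split; first by right. move=> u [<- // | hu]. exact: Hm.
exists a; split; first by left. move=> u [<- | hu]; first lra. have := Hm u hu. lra.
Qed.

Lemma exact_list (P : R -> Prop) (l : list R) :
  exists L, List.NoDup L /\ forall u, List.In u L <-> List.In u l /\ P u.
Proof.
elim: l => [|a l [L [hL HL]]].
  exists nil; split; first by constructor. by move=> u; split => [[]|[[] _]].
case: (classic (P a /\ ~ List.In a L)) => [[hPa haL] | hno].
  exists (a :: L); split; first by constructor.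
  move=> u; split.
    case => [<- | hu]; first by split => //; left.
    have [h1 h2] := (HL u).1 hu. by split => //; right.
  case => [[<- | hu] hPu]; first by left.
  right; exact: (HL u).2.
exists L; split => // u; split.
  move=> hu; have [h1 h2] := (HL u).1 hu; split => //; by right.
case => [[<- | hu] hPu]; last exact: (HL u).2.
apply: NNPP => hn; apply: hno; split => //.
Qed.

Section Main.
Variables (n p : nat) (M : 'I_p -> mat n) (g : R) (sigma : R -> 'I_p) (x : R -> vec n).
Variables (Wr Wi : 'I_p -> mat n) (be K : R).
Hypothesis Hsol : solution g M sigma x.
Hypothesis Hsw : switching_signal sigma.
Hypothesis hg : 0 <= g.
Hypothesis hK : 0 <= K.
Hypothesis HL : forall k y, bil (Wr k) (Wi k) y (mulmv (M k) y) <= - be * qf (Wr k) (Wi k) y.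
Hypothesis Hq1 : forall k y, sq y <= K * qf (Wr k) (Wi k) y.
Hypothesis Hq2 : forall k y, qf (Wr k) (Wi k) y <= K * sq y.

Let q k y := qf (Wr k) (Wi k) y.
Definition En t := qf (Wr (sigma t)) (Wi (sigma t)) (x t) * exp (2 * be * g * t).

Lemma q_switch k k' y : q k' y <= K * K * q k y.
Proof.
have h1 := Hq2 k' y. have h2 := Hq1 k y.
have : K * sq y <= K * (K * q k y) by apply: Rmult_le_compat_l.
rewrite /q in h1 h2 *. lra.
Qed.

Lemma Hrc : forall t, 0 <= t -> exists d, 0 < d /\ forall s, t <= s < t + d -> sigma s = sigma t.
Proof. by case: Hsw. Qed.

Lemma flat s t : 0 <= s <= t -> (forall u, s < u <= t -> ~ discontinuity sigma u) -> En t <= En s.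
Proof.
move=> hst hnd.
case: (Req_dec s t) => [-> | hne]; first lra.
have hlt : s < t by lra.
have hc := const_between _ sigma Hrc s t ltac:(lra) hlt (fun u hu => hnd u ltac:(lra)).
have hst' : sigma t = sigma s.
  have hlc : locally_constant_at sigma t.
    apply: NNPP => hnl; apply: (hnd t); [lra | split; [lra | exact: hnl]].
  have [d [hd Hd]] := hlc.
  pose v := Rmax s (t - d / 2).
  have hv1 : s <= v := Rmax_l _ _. have hv2 : t - d / 2 <= v := Rmax_r _ _.
  have hv3 : v < t by rewrite /v; apply: Rmax_lub_lt; lra.
  have e1 := hc v (conj hv1 hv3).
  have e2 : sigma v = sigma t by apply: Hd; [lra | rewrite Rabs_left; lra].
  by rewrite -e2 e1.
rewrite /En hst'.
apply: (interval_decay n p M g sigma x Hsol (sigma s)) => //; first lra.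
move=> u hu; apply: hc; lra.
Qed.

Lemma jump s t : 0 <= s < t -> (forall u, s < u < t -> ~ discontinuity sigma u) -> En t <= K * K * En s.
Proof.
move=> hst hnd.
have hc := const_between _ sigma Hrc s t ltac:(lra) (proj2 hst) hnd.
have h1 : qf (Wr (sigma s)) (Wi (sigma s)) (x t) * exp (2 * be * g * t) <=
          qf (Wr (sigma s)) (Wi (sigma s)) (x s) * exp (2 * be * g * s).
  apply: (interval_decay n p M g sigma x Hsol (sigma s)) => //; try lra.
  move=> u hu; apply: hc; lra.
have h2 := q_switch (sigma s) (sigma t) (x t). rewrite /q in h2.
have he := exp_pos (2 * be * g * t).
have : qf (Wr (sigma t)) (Wi (sigma t)) (x t) * exp (2 * be * g * t) <=
       K * K * qf (Wr (sigma s)) (Wi (sigma s)) (x t) * exp (2 * be * g * t).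
  apply: Rmult_le_compat_r; lra.
have : K * K * (qf (Wr (sigma s)) (Wi (sigma s)) (x t) * exp (2 * be * g * t)) <=
       K * K * (qf (Wr (sigma s)) (Wi (sigma s)) (x s) * exp (2 * be * g * s)).
  apply: Rmult_le_compat_l => //. by apply: Rmult_le_pos.
rewrite /En. lra.
Qed.

Lemma In_L' (l1 l2 : list R) s u : List.In u (l1 ++ s :: l2)%list -> u <> s -> List.In u (l1 ++ l2)%list.
Proof.
move=> /List.in_app_iff [h | [h | h]] hne; apply/List.in_app_iff; [by left | by case: hne | by right].
Qed.

Lemma In_L'2 (l1 l2 : list R) s u : List.In u (l1 ++ l2)%list -> List.In u (l1 ++ s :: l2)%list.
Proof.
move=> /List.in_app_iff [h | h]; apply/List.in_app_iff; [by left | right; by right].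
Qed.

Lemma claim nn : forall t L, 0 <= t -> List.NoDup L ->
  (forall u, List.In u L <-> 0 < u <= t /\ discontinuity sigma u) ->
  length L = nn -> En t <= (K * K) ^ nn * En 0.
Proof.
have hmu : 0 <= K * K by apply: Rmult_le_pos.
elim: nn => [|nn IH] t L ht hL HL' hlen.
  have hnil : L = nil by case: L hlen HL' hL.
  have := flat 0 t ltac:(lra) (fun u hu hd => ltac:(have := (HL' u).2 (conj (conj (proj1 hu) (proj2 hu)) hd); rewrite hnil; case)).
  rewrite /= Rmult_1_l. exact.
have hne : L <> nil by move=> h; rewrite h in hlen.
have [s [hsL hsM]] := list_max L hne.
have [[hs0 hst] hsd] := (HL' s).1 hsL.
have h1 : En t <= En s.
  apply: flat; first lra.
  move=> u hu hd. have := hsM u ((HL' u).2 (conj (conj (ltac:(lra) : 0 < u) (proj2 hu)) hd)). lra.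
have [l1 [l2 eL]] := List.in_split s L hsL.
rewrite eL in hL hlen HL'.
have hL' := List.NoDup_remove_1 _ _ _ hL.
have hsn := List.NoDup_remove_2 _ _ _ hL.
have hlen' : length (l1 ++ l2)%list = nn.
  rewrite List.length_app; rewrite List.length_app /= in hlen. lia.
have memL' : forall u, List.In u (l1 ++ l2)%list -> List.In u L /\ u <> s.
  move=> u hu; split; first by rewrite eL; exact: In_L'2.
  by move=> e; apply: hsn; rewrite -e.
case: (classic ((l1 ++ l2)%list = nil)) => hnil.
  have hnn : nn = 0%nat by rewrite -hlen' hnil.
  have h2 : En s <= K * K * En 0.
    apply: jump; first lra.
    move=> u hu hd.
    have hu' : 0 < u <= t by lra.
    have hin := (HL' u).2 (conj hu' hd).
    have : List.In u (l1 ++ l2)%list by apply: In_L' hin _; lra.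
    by rewrite hnil.
  rewrite hnn /=. lra.
have [s' [hs'L hs'M]] := list_max _ hnil.
have [hs'L0 hs'ns] := memL' s' hs'L.
have hs'le := hsM s' hs'L0.
have [[hs'0 hs't] hs'd] := (HL' s').1 (ltac:(rewrite -eL; exact hs'L0)).
have hs's : s' < s by lra.
have h2 : En s <= K * K * En s'.
  apply: jump; first lra.
  move=> u hu hd.
  have hu' : 0 < u <= t by lra.
  have hin := (HL' u).2 (conj hu' hd).
  have hus : u <> s by lra.
  have := hs'M u (In_L' _ _ _ _ hin hus). lra.
have h3 : En s' <= (K * K) ^ nn * En 0.
  apply: (IH s' (l1 ++ l2)%list) => //; first lra.
  move=> u; split.
    move=> hu. have [huL _] := memL' u hu.
    have [[hu0 _] hud] := (HL' u).1 (ltac:(rewrite -eL; exact huL)).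
    have := hs'M u hu. split => //; lra.
  move=> [[hu0 hus'] hud].
  have hu' : 0 < u <= t by lra.
  have hin := (HL' u).2 (conj hu' hud).
  apply: In_L' hin _; lra.
have : K * K * En s' <= K * K * ((K * K) ^ nn * En 0) by apply: Rmult_le_compat_l.
rewrite /=. lra.
Qed.
End Main.

Open Scope R_scope.


Lemma count_bound p (sigma : R -> 'I_p) tauD N0 t L : S_ave tauD N0 sigma -> 0 <= t ->
  List.NoDup L -> (forall u, List.In u L <-> 0 < u <= t /\ discontinuity sigma u) ->
  INR (length L) <= N0 + t / tauD + 1.
Proof.
move=> [_ HN] ht hL HL.
have HN0 := HN 0 t (Rle_refl 0) ht.
rewrite Rminus_0_r in HN0.
case: (classic (List.In t L)) => htL.
  have [l1 [l2 eL]] := List.in_split t L htL.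
  rewrite eL in hL HL *.
  have hL' := List.NoDup_remove_1 _ _ _ hL.
  have hsn := List.NoDup_remove_2 _ _ _ hL.
  have Hmem : forall u, List.In u (l1 ++ l2)%list -> 0 < u < t /\ discontinuity sigma u.
    move=> u hu. have hu2 := In_L'2 _ _ t u hu. have [[h1 h2] h3] := (HL u).1 hu2.
    have hne : u <> t by move=> e; apply: hsn; rewrite -e.
    split => //; lra.
  have H := HN0 _ hL' Hmem.
  rewrite List.length_app in H. rewrite List.length_app /= Nat.add_succ_r S_INR. lra.
have Hmem : forall u, List.In u L -> 0 < u < t /\ discontinuity sigma u.
  move=> u hu. have [[h1 h2] h3] := (HL u).1 hu.
  have hne : u <> t by move=> e; apply: htL; rewrite -e.
  split => //; lra.
have H := HN0 _ hL Hmem. lra.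
Qed.

Definition LD {n} (A : mat n) (d : R * R * (mat n * mat n)) : Prop :=
  0 < d.1.1 /\ 0 < d.1.2 /\
  (forall y, sq y <= d.1.2 * qf d.2.1 d.2.2 y) /\ (forall y, qf d.2.1 d.2.2 y <= d.1.2 * sq y) /\
  (forall y, bil d.2.1 d.2.2 y (mulmv A y) <= - d.1.1 * qf d.2.1 d.2.2 y).

Lemma lyapD n (A : mat n) : hurwitz A -> exists d, LD A d.
Proof.
move=> H; have [be [K [Wr [Wi h]]]] := lyap n A H.
by exists (be, K, (Wr, Wi)).
Qed.

Lemma qf_ge0 n (Wr Wi : mat n) y : 0 <= qf Wr Wi y.
Proof.
apply: sum_ge0 => j.
have := Rle_0_sqr (lin Wr y j); have := Rle_0_sqr (lin Wi y j); rewrite /Rsqr; lra.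
Qed.

Lemma exp_le a b : a <= b -> exp a <= exp b.
Proof. case=> h; [apply: Rlt_le; exact: exp_increasing | rewrite h; lra]. Qed.

Theorem lemma3 (n p : nat) (M : 'I_p -> mat n) (nrm : vec n -> R)
    (tauD N0 lam : R) :
  is_norm nrm ->
  (forall k : 'I_p, hurwitz (M k)) ->
  0 < tauD -> 0 < N0 -> 0 < lam ->
  exists g0, 0 < g0 /\
    forall g, g0 <= g ->
      exists c, 0 < c /\
        forall sigma : R -> 'I_p, S_ave tauD N0 sigma ->
          forall x : R -> vec n, solution g M sigma x ->
            forall t, 0 <= t -> nrm (x t) <= c * exp (- lam * t) * nrm (x 0).
Proof.
move=> Hn Hh htau hN0 hlam.
pose dat k := proj1_sig (constructive_indefinite_description _ (lyapD n (M k) (Hh k))).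
have Hdat : forall k, LD (M k) (dat k).
  move=> k; exact: (proj2_sig (constructive_indefinite_description _ (lyapD n (M k) (Hh k)))).
pose bek k := (dat k).1.1. pose Kk k := (dat k).1.2.
pose Wr k := (dat k).2.1. pose Wi k := (dat k).2.2.
pose be0 := / (1 + \big[Rplus/R0]_(k < p) / bek k).
pose K0 := 1 + \big[Rplus/R0]_(k < p) Kk k.
have hbek : forall k, 0 < bek k by move=> k; case: (Hdat k).
have hKk : forall k, 0 < Kk k by move=> k; case: (Hdat k) => _ [].
have hsb : 0 <= \big[Rplus/R0]_(k < p) / bek k.
  apply: sum_ge0 => k; apply: Rlt_le; apply: Rinv_0_lt_compat; exact: hbek.
have hbe0 : 0 < be0 by apply: Rinv_0_lt_compat; lra.
have hbe0k : forall k, be0 <= bek k.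
  move=> k.
  have h1 : / bek k <= \big[Rplus/R0]_(k < p) / bek k.
    apply: (sum_ge_term _ (fun k => / bek k) k) => l.
    apply: Rlt_le; apply: Rinv_0_lt_compat; exact: hbek.
  rewrite /be0 -(Rinv_inv (bek k)).
  apply: Rinv_le_contravar; first by apply: Rinv_0_lt_compat; exact: hbek.
  lra.
have hsK : 0 <= \big[Rplus/R0]_(k < p) Kk k.
  apply: sum_ge0 => k; apply: Rlt_le; exact: hKk.
have hK0k : forall k, Kk k <= K0.
  move=> k. have := sum_ge_term _ Kk k (fun l => Rlt_le _ _ (hKk l)). rewrite /K0; lra.
have hK0 : 1 <= K0 by rewrite /K0; lra.
have HL : forall k y, bil (Wr k) (Wi k) y (mulmv (M k) y) <= - be0 * qf (Wr k) (Wi k) y.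
  move=> k y; have [_ [_ [_ [_ h]]]] := Hdat k. have := h y.
  have hq := qf_ge0 n (Wr k) (Wi k) y.
  have : be0 * qf (Wr k) (Wi k) y <= bek k * qf (Wr k) (Wi k) y by apply: Rmult_le_compat_r.
  rewrite /Wr /Wi /bek; lra.
have Hq1 : forall k y, sq y <= K0 * qf (Wr k) (Wi k) y.
  move=> k y; have [_ [_ [h _]]] := Hdat k. have := h y.
  have hq := qf_ge0 n (Wr k) (Wi k) y.
  have : Kk k * qf (Wr k) (Wi k) y <= K0 * qf (Wr k) (Wi k) y by apply: Rmult_le_compat_r.
  rewrite /Wr /Wi /Kk; lra.
have Hq2 : forall k y, qf (Wr k) (Wi k) y <= K0 * sq y.
  move=> k y; have [_ [_ [_ [h _]]]] := Hdat k. have := h y.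
  have hq := sq_ge0 n y.
  have : Kk k * sq y <= K0 * sq y by apply: Rmult_le_compat_r.
  rewrite /Wr /Wi /Kk; lra.
have [C1 [hC1 HC1]] := nrm_up n nrm Hn.
have [C2 [hC2 HC2]] := nrm_low n nrm Hn.
pose mu := K0 * K0.
have hmu : 1 <= mu by rewrite /mu; nra.
pose lm := ln mu.
have hlm : 0 <= lm.
  rewrite /lm; case: hmu => h; last by rewrite -h ln_1; lra.
  rewrite -ln_1; apply: Rlt_le; apply: ln_increasing; lra.
pose g0 := (2 * lam + lm / tauD) / (2 * be0) + 1.
have hlt : 0 <= lm / tauD by apply: Rmult_le_pos => //; apply: Rlt_le; apply: Rinv_0_lt_compat.
have hg0 : 0 < g0.
  have : 0 <= (2 * lam + lm / tauD) / (2 * be0).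
    apply: Rmult_le_pos; first lra. apply: Rlt_le; apply: Rinv_0_lt_compat; lra.
  rewrite /g0; lra.
exists g0; split => // g hg.
pose cc := C1 * K0 * K0 * C2 * exp ((N0 + 1) * lm).
have hcc : 0 < cc.
  rewrite /cc. have := exp_pos ((N0 + 1) * lm). move=> he.
  repeat apply: Rmult_lt_0_compat => //; lra.
exists (sqrt cc); split; first exact: sqrt_lt_R0.
move=> sigma HS x Hsol t ht.
have Hsw : switching_signal sigma by case: HS.
have hgg : 0 <= g by lra.
have [l Hl] := (proj2 Hsw) t ht.
have [L [hL HL0]] := exact_list (fun u => 0 < u <= t /\ discontinuity sigma u) l.
have HL' : forall u, List.In u L <-> 0 < u <= t /\ discontinuity sigma u.
  move=> u; split; first by move=> /(HL0 u).1 [].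
  move=> [h1 h2]; apply/(HL0 u).2; split => //. apply: Hl => //; lra.
have hcl := claim n p M g sigma x Wr Wi be0 K0 Hsol Hsw hgg ltac:(lra) HL Hq1 Hq2 _ t L ht hL HL' erefl.
have hcnt := count_bound p sigma tauD N0 t L HS ht hL HL'.
rewrite /En Rmult_0_r exp_0 Rmult_1_r in hcl.
set nn := length L in hcl hcnt.
set qt := qf (Wr (sigma t)) (Wi (sigma t)) (x t) in hcl.
set q0 := qf (Wr (sigma 0)) (Wi (sigma 0)) (x 0) in hcl.
have hq0 : 0 <= q0 := qf_ge0 _ _ _ _.
have hqt : 0 <= qt := qf_ge0 _ _ _ _.
have hmun : mu ^ nn <= exp ((N0 + 1) * lm) * exp (t * (lm / tauD)).
  rewrite -exp_plus -(exp_ln (mu ^ nn)); last by apply: pow_lt; lra.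
  rewrite ln_pow; last lra.
  apply: exp_le. rewrite -/lm.
  have : INR nn * lm <= (N0 + t / tauD + 1) * lm by apply: Rmult_le_compat_r.
  have -> : (N0 + 1) * lm + t * (lm / tauD) = (N0 + t / tauD + 1) * lm by rewrite /Rdiv; ring.
  lra.
pose ka := 2 * be0 * g.
have hka : t * (lm / tauD) - ka * t <= - 2 * lam * t.
  have : 2 * lam + lm / tauD <= ka.
    rewrite /ka.
    have e : 2 * be0 * g0 = 2 * lam + lm / tauD + 2 * be0 by rewrite /g0; field; lra.
    have : 2 * be0 * g0 <= 2 * be0 * g by apply: Rmult_le_compat_l; lra.
    lra.
  nra.
have hekt := exp_pos (ka * t).
have hqt2 : qt <= mu ^ nn * q0 * exp (- (ka * t)).
  rewrite exp_Ropp.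
  apply: (Rmult_le_reg_r (exp (ka * t))) => //.
  rewrite Rmult_assoc Rinv_l; last lra. rewrite Rmult_1_r.
  exact: hcl.
set P := exp ((N0 + 1) * lm).
set Y := exp (- lam * t).
have hP : 0 < P := exp_pos _. have hY : 0 < Y := exp_pos _.
have hmuY : mu ^ nn * exp (- (ka * t)) <= P * (Y * Y).
  have hYY : Y * Y = exp (- 2 * lam * t) by rewrite /Y -exp_plus; congr exp; ring.
  rewrite hYY.
  apply: (Rle_trans _ (P * exp (t * (lm / tauD)) * exp (- (ka * t)))).
    apply: Rmult_le_compat_r; [apply: Rlt_le; exact: exp_pos | exact: hmun].
  rewrite Rmult_assoc -exp_plus. apply: Rmult_le_compat_l; first lra.
  apply: exp_le; lra.
have e1 : qt <= P * (Y * Y) * q0.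
  apply: (Rle_trans _ _ _ hqt2).
  have -> : mu ^ nn * q0 * exp (- (ka * t)) = (mu ^ nn * exp (- (ka * t))) * q0 by ring.
  apply: Rmult_le_compat_r => //.
have h1 := HC1 (x t). have h2 := Hq1 (sigma t) (x t). have h3 := Hq2 (sigma 0) (x 0).
have h4 := HC2 (x 0).
rewrite -/qt in h2. rewrite -/q0 in h3.
set A := nrm (x t) in h1 *. set B := nrm (x 0) in h4 *.
have hA : 0 <= A := nrm_ge0 n nrm Hn (x t). have hB : 0 <= B := nrm_ge0 n nrm Hn (x 0).
have hsqt := sq_ge0 n (x t). have hsq0 := sq_ge0 n (x 0).
have f1 : A * A <= C1 * (K0 * qt).
  apply: (Rle_trans _ _ _ h1). apply: Rmult_le_compat_l; lra.
have f2 : C1 * (K0 * qt) <= C1 * (K0 * (P * (Y * Y) * q0)).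
  apply: Rmult_le_compat_l; first lra. apply: Rmult_le_compat_l; lra.
have f3 : q0 <= K0 * (C2 * (B * B)).
  apply: (Rle_trans _ _ _ h3). apply: Rmult_le_compat_l; lra.
have hPYY : 0 <= P * (Y * Y) by apply: Rmult_le_pos; [lra | apply: Rle_0_sqr].
have f4 : C1 * (K0 * (P * (Y * Y) * q0)) <= C1 * (K0 * (P * (Y * Y) * (K0 * (C2 * (B * B))))).
  apply: Rmult_le_compat_l; first lra. apply: Rmult_le_compat_l; first lra.
  apply: Rmult_le_compat_l => //.
have f5 : A * A <= (sqrt cc * Y * B) * (sqrt cc * Y * B).
  have -> : sqrt cc * Y * B * (sqrt cc * Y * B) = (sqrt cc * sqrt cc) * (Y * Y) * (B * B) by ring.
  rewrite sqrt_sqrt; last lra.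
  have -> : cc * (Y * Y) * (B * B) = C1 * (K0 * (P * (Y * Y) * (K0 * (C2 * (B * B))))) by rewrite /cc -/P; ring.
  lra.
apply: Rsqr_incr_0_var; first by rewrite /Rsqr.
apply: Rmult_le_pos; last lra. apply: Rmult_le_pos; [exact: sqrt_pos | lra].
Qed.
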